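(* Fix constants $B>0$, $1\le\Gamma\le 3$, $0<\kappa\le 1$, and Riemann data $\varrho_l>0$, $\varrho_r>0$, $\upsilon_l,\upsilon_r\ge0$ with $\upsilon_r\le\upsilon_l-\frac{B}{\varrho_l^{\kappa}}$. For $a>0$, $A>0$ (with $a<1/\max(\varrho_l,\varrho_r)$) let $p(\varrho)=A\left(\frac{\varrho}{1-a\varrho}\right)^{\Gamma}-\frac{B}{\varrho^{\kappa}}$ and let $(\varrho_a,\upsilon_a)$ be the shock-plus-contact-discontinuity Riemann solution of $$\varrho_t+(\varrho\upsilon)_x=0,\qquad (\varrho(\upsilon+p))_t+(\varrho\upsilon(\upsilon+p))_x=0,$$ with $(\varrho,\upsilon)(x,0)=(\varrho_l,\upsilon_l)$ for $x<0$ and $(\varrho_r,\upsilon_r)$ for $x>0$, namely, with $\zeta=x/t$, $$(\varrho_a,\upsilon_a)(\zeta)=\begin{cases}(\varrho_l,\upsilon_l),&\zeta<\sigma_1,\\ (\varrho_*,\upsilon_r),&\sigma_1<\zeta<\sigma_2,\\ (\varrho_r,\upsilon_r),&\zeta>\sigma_2,\end{cases}$$ where $\varrho_*\in(\varrho_l,1/a)$ solves $\upsilon_r=-p(\varrho_* )+\upsilon_l+p(\varrho_l)$, $\sigma_1=\upsilon_l-\frac{\varrho_*(p(\varrho_* )-p(\varrho_l))}{\varrho_*-\varrho_l}$ and $\sigma_2=\upsilon_r$. Then $$\lim_{a,A\to0}\upsilon_a(x,t)=\begin{cases}\upsilon_l,&x<\upsilon_r t,\\ \upsilon_r,&x=\upsilon_r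 t,\\ \upsilon_r,&x>\upsilon_r t,\end{cases}$$ and $\varrho_a$ converges in the sense of distributions to the sum of a step function and a Dirac delta measure supported on the line $x=\upsilon_r t$ with weight $w(t)=\varrho_l(\upsilon_l-\upsilon_r)t$: for every $\psi\in C_0^\infty(\mathbb{R}\times\mathbb{R}^+)$, $$\lim_{a,A\to0}\int_0^{\infty}\!\!\int_{-\infty}^{\infty}\varrho_a(x/t)\psi(x,t)\,dx\,dt=\int_0^\infty \varrho_l(\upsilon_l-\upsilon_r)t\,\psi(\upsilon_r t,t)\,dt+\int_0^\infty\!\!\int_{-\infty}^{\infty}H(x-\upsilon_r t)\psi(x,t)\,dx\,dt,$$ where $H(y)=\varrho_l$ for $y<0$ and $H(y)=\varrho_r$ for $y>0$.
   Context: The limit $a,A\to0$ is taken with $B,\Gamma,\kappa$ and the Riemann data fixed. In this situation the shock connects $(\varrho_l,\upsilon_l)$ to the intermediate state $(\varrho_*,\upsilon_r)$ (with $\varrho_*>\varrho_l$) and the contact discontinuity connects $(\varrho_*,\upsilon_r)$ to $(\varrho_r,\upsilon_r)$. *)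

(* Defs.v *)
From Stdlib Require Import Reals.
From Coquelicot Require Import Coquelicot.
Open Scope R_scope.

Definition pres (a A B Gam kap rho : R) : R :=
  A * Rpower (rho / (1 - a * rho)) Gam - B / Rpower rho kap.

Definition admissible (rl rr a A : R) : Prop :=
  0 < a /\ 0 < A /\ a < / Rmax rl rr.

Definition lim_aA (rl rr : R) (F : R -> R -> R) (L : R) : Prop :=
  forall eps : R, 0 < eps -> exists delta : R, 0 < delta /\
    forall a A : R, admissible rl rr a A -> a < delta -> A < delta ->
      Rabs (F a A - L) < eps.

Definition sigma1 (a A B Gam kap rl ul rs : R) : R :=
  ul - rs * (pres a A B Gam kap rs - pres a A B Gam kap rl) / (rs - rl).

(* Riemann solution as a function of zeta = x/t; sigma_2 = ur.
   Conventions on the (measure-zero) discontinuity lines: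
   zeta = sigma1 and zeta = sigma2 are assigned to the middle state. *)
Definition rho_sol (a A B Gam kap rl rr ul ur rs zeta : R) : R :=
  if Rlt_dec zeta (sigma1 a A B Gam kap rl ul rs) then rl
  else if Rle_dec zeta ur then rs else rr.

Definition u_sol (a A B Gam kap rl rr ul ur rs zeta : R) : R :=
  if Rlt_dec zeta (sigma1 a A B Gam kap rl ul rs) then ul
  else if Rle_dec zeta ur then ur else ur.

Definition Hstep (rl rr y : R) : R := if Rlt_dec y 0 then rl else rr.

Fixpoint Ck (k : nat) (f : R -> R -> R) : Prop :=
  match k with
  | O => forall x t, continuity_2d_pt f x t
  | S k' =>
      (forall x t, continuity_2d_pt f x t) /\
      (forall x t, ex_derive (fun y => f y t) x /\ ex_derive (fun s => f x s) t) /\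
      Ck k' (fun x t => Derive (fun y => f y t) x) /\
      Ck k' (fun x t => Derive (fun s => f x s) t)
  end.

Definition test_fun (psi : R -> R -> R) : Prop :=
  (forall k, Ck k psi) /\
  exists X T1 T2 : R, 0 < T1 /\ T1 <= T2 /\
    forall x t, (X < Rabs x \/ t < T1 \/ T2 < t) -> psi x t = 0.

Definition dint (f : R -> R -> R) : R :=
  RInt_gen (fun t => RInt_gen (fun x => f x t)
                       (Rbar_locally m_infty) (Rbar_locally p_infty))
           (at_point 0) (Rbar_locally p_infty).

(* Main.v *)
Require Import Defs.
From Stdlib Require Import Reals Lra FunctionalExtensionality.
From Coquelicot Require Import Coquelicot.
Open Scope R_scope.

Lemma cont_to_eps (f : R -> R) x : continuous f x ->
  forall eps, 0 < eps -> exists d, 0 < d /\ forall y, Rabs (y - x) < d -> Rabs (f y - f x) < eps.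
Proof.
  intros H eps He.
  destruct (proj1 (filterlim_locally f (f x)) H (mkposreal eps He)) as [d Hd].
  exists d; split; [apply cond_pos|].
  intros y Hy. apply (Hd y). exact Hy.
Qed.

Lemma eps_to_cont (f : R -> R) x :
  (forall eps, 0 < eps -> exists d, 0 < d /\ forall y, Rabs (y - x) < d -> Rabs (f y - f x) < eps) ->
  continuous f x.
Proof.
  intros H. apply (proj2 (filterlim_locally f (f x))).
  intros eps. destruct (H eps (cond_pos eps)) as [d [Hd H']].
  exists (mkposreal d Hd). intros y Hy. apply H'. exact Hy.
Qed.

Lemma cont2d_x (psi : R -> R -> R) t : (forall x t, continuity_2d_pt psi x t) ->
  forall x, continuous (fun y => psi y t) x.
Proof.
  intros H x. apply eps_to_cont. intros eps He.
  destruct (H x t (mkposreal eps He)) as [d Hd].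
  exists d; split; [apply cond_pos|]. intros y Hy. apply Hd; auto.
  rewrite Rminus_diag, Rabs_R0; apply cond_pos.
Qed.

Lemma exR (psi : R -> R -> R) t a b : (forall x t, continuity_2d_pt psi x t) ->
  ex_RInt (fun x => psi x t) a b.
Proof. intros H. apply (ex_RInt_continuous (V:=R_CompleteNormedModule)). intros; apply cont2d_x; auto. Qed.

Lemma RInt_zero_fn (f : R -> R) a b : (forall x, f x = 0) -> RInt f a b = 0.
Proof.
  intros H. rewrite (RInt_ext f (fun _ => 0)) by (intros; apply H).
  rewrite RInt_const. unfold scal; simpl; unfold mult; simpl. ring.
Qed.

Lemma param_cont (psi : R -> R -> R) (u v : R -> R) t0 :
  (forall x t, continuity_2d_pt psi x t) -> continuous u t0 -> continuous v t0 ->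
  continuous (fun t => RInt (fun x => psi x t) (u t) (v t)) t0.
Proof.
  intros Hp Hu Hv.
  set (F0 := fun w => RInt (fun x => psi x t0) 0 w).
  apply continuous_ext with (f := fun t => RInt (fun x => psi x t - psi x t0) (u t) (v t) + (F0 (v t) - F0 (u t))).
  { intro t. unfold F0.
    rewrite <- (RInt_Chasles (fun x => psi x t0) 0 (u t) (v t)) by (apply exR; auto).
    assert (E := RInt_minus (fun x => psi x t) (fun x => psi x t0) (u t) (v t) (exR psi t _ _ Hp) (exR psi t0 _ _ Hp)).
    change (RInt (fun x => psi x t - psi x t0) (u t) (v t) = RInt (fun x => psi x t) (u t) (v t) - RInt (fun x => psi x t0) (u t) (v t)) in E.
    rewrite E. unfold plus; simpl. ring. }
  apply (continuous_plus (fun t => RInt (fun x => psi x t - psi x t0) (u t) (v t)) (fun t => F0 (v t) - F0 (u t))).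
  2:{ assert (HF : forall w, continuous F0 w).
      { intro w. apply (continuous_RInt_1 (fun x => psi x t0) 0 w F0).
        exists (mkposreal 1 Rlt_0_1). intros; unfold F0; apply (RInt_correct (V:=R_CompleteNormedModule)); apply exR; auto. }
      apply (continuous_minus (fun t => F0 (v t)) (fun t => F0 (u t))).
      apply continuous_comp; auto. apply continuous_comp; auto. }
  apply eps_to_cont. intros eps He.
  rewrite (RInt_zero_fn (fun x => psi x t0 - psi x t0)) by (intros; ring).
  destruct (cont_to_eps u t0 Hu 1 Rlt_0_1) as [du [Hdu Hu1]].
  destruct (cont_to_eps v t0 Hv 1 Rlt_0_1) as [dv [Hdv Hv1]].
  set (L0 := Rmin (u t0) (v t0) - 1). set (L1 := Rmax (u t0) (v t0) + 1).
  set (W := Rabs (v t0 - u t0) + 2).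
  assert (HW : 0 < W) by (unfold W; pose proof (Rabs_pos (v t0 - u t0)); lra).
  assert (He' : 0 < eps / (2 * W)) by (apply Rdiv_lt_0_compat; lra).
  destruct (uniform_continuity_2d psi L0 L1 (t0 - 1) (t0 + 1) (fun x t _ _ => Hp x t) (mkposreal _ He')) as [dl Hdl].
  exists (Rmin (Rmin du dv) (Rmin dl 1)). split.
  { apply Rmin_pos; apply Rmin_pos; try lra; apply cond_pos. }
  intros t Ht.
  assert (Ht1 : Rabs (t - t0) < du /\ Rabs (t - t0) < dv /\ Rabs (t - t0) < dl /\ Rabs (t - t0) < 1).
  { pose proof (Rmin_l (Rmin du dv) (Rmin dl 1)). pose proof (Rmin_r (Rmin du dv) (Rmin dl 1)).
    pose proof (Rmin_l du dv). pose proof (Rmin_r du dv). pose proof (Rmin_l dl 1). pose proof (Rmin_r dl 1).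
    lra. }
  destruct Ht1 as [T1 [T2 [T3 T4]]].
  specialize (Hu1 t T1). specialize (Hv1 t T2).
  apply Rabs_lt_between in Hu1. apply Rabs_lt_between in Hv1.
  assert (Hm1 := Rmin_l (u t0) (v t0)). assert (Hm2 := Rmin_r (u t0) (v t0)).
  assert (Hm3 := Rmax_l (u t0) (v t0)). assert (Hm4 := Rmax_r (u t0) (v t0)).
  assert (HtB : t0 - 1 <= t <= t0 + 1) by (apply Rabs_lt_between in T4; lra).
  rewrite Rminus_0_r.
  assert (Hb : norm (RInt (fun x => psi x t - psi x t0) (u t) (v t)) <= Rabs (v t - u t) * (eps / (2 * W))).
  { apply (norm_RInt_le_const_abs (V:=R_NormedModule) (fun x => psi x t - psi x t0)).
    - intros x Hx. change (norm (psi x t - psi x t0)) with (Rabs (psi x t - psi x t0)).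
      assert (Hx' : L0 <= x <= L1).
      { destruct Hx as [Hx1 Hx2]. unfold L0, L1.
        assert (Rmin (u t) (v t) >= Rmin (u t0) (v t0) - 1).
        { unfold Rmin at 1; destruct Rle_dec; lra. }
        assert (Rmax (u t) (v t) <= Rmax (u t0) (v t0) + 1).
        { unfold Rmax at 1; destruct Rle_dec; lra. }
        lra. }
      left. apply (Hdl x t0 x t); try lra.
      rewrite Rminus_diag, Rabs_R0; apply cond_pos.
    - apply (RInt_correct (V:=R_CompleteNormedModule)). apply (ex_RInt_minus (fun x => psi x t) (fun x => psi x t0)); apply exR; auto. }
  change (norm ?x) with (Rabs x) in Hb.
  eapply Rle_lt_trans; [apply Hb|].
  assert (Rabs (v t - u t) <= W).
  { unfold W. replace (v t - u t) with ((v t0 - u t0) + ((v t - v t0) - (u t - u t0))) by ring.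
    eapply Rle_trans; [apply Rabs_triang|]. apply Rplus_le_compat_l.
    apply Rabs_le; lra. }
  apply Rle_lt_trans with (W * (eps / (2 * W))).
  { apply Rmult_le_compat_r; lra. }
  replace (W * (eps / (2 * W))) with (eps / 2) by (field; lra). lra.
Qed.

Lemma comp_cont (psi : R -> R -> R) c t0 : (forall x t, continuity_2d_pt psi x t) ->
  continuous (fun t => psi (c * t) t) t0.
Proof.
  intros Hp. apply eps_to_cont. intros eps He.
  destruct (Hp (c * t0) t0 (mkposreal eps He)) as [d Hd].
  exists (d / (Rabs c + 1)). split.
  { apply Rdiv_lt_0_compat; [apply cond_pos|]. pose proof (Rabs_pos c); lra. }
  intros y Hy. apply Hd.
  - rewrite <- Rmult_minus_distr_l, Rabs_mult.
    assert (0 <= Rabs c) by apply Rabs_pos.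
    assert (Hd0 := cond_pos d).
    apply Rle_lt_trans with ((Rabs c + 1) * Rabs (y - t0)).
    { apply Rmult_le_compat_r; [apply Rabs_pos | lra]. }
    apply Rmult_lt_reg_l with (/ (Rabs c + 1)). apply Rinv_0_lt_compat; lra.
    rewrite <- Rmult_assoc, Rinv_l by lra. rewrite Rmult_1_l.
    replace (/ (Rabs c + 1) * d) with (d / (Rabs c + 1)) by (unfold Rdiv; ring). exact Hy.
  - apply Rlt_le_trans with (1 := Hy).
    assert (Hd0 := cond_pos d). assert (0 <= Rabs c) by apply Rabs_pos.
    unfold Rdiv. rewrite <- (Rmult_1_r d) at 2. apply Rmult_le_compat_l; [lra|].
    rewrite <- Rinv_1. apply Rinv_le_contravar; lra.
Qed.

Lemma is_RInt_zero_out (phi : R -> R) a b : (forall x, Rmin a b < x < Rmax a b -> phi x = 0) ->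
  is_RInt phi a b 0.
Proof.
  intros H. apply (is_RInt_ext (fun _ => 0)). intros; symmetry; auto.
  assert (E := is_RInt_const (V:=R_NormedModule) a b 0).
  unfold scal in E; simpl in E; unfold mult in E; simpl in E. rewrite Rmult_0_r in E. exact E.
Qed.

Lemma supp_RInt (phi : R -> R) c d l : c <= d ->
  (forall x, x < c \/ d < x -> phi x = 0) -> is_RInt phi c d l ->
  forall a b, a <= c -> d <= b -> is_RInt phi a b l.
Proof.
  intros Hcd Hz Hl a b Ha Hb.
  assert (E1 : is_RInt phi a c 0).
  { apply is_RInt_zero_out. intros x Hx. apply Hz. left.
    rewrite Rmax_right in Hx by lra. lra. }
  assert (E2 : is_RInt phi d b 0).
  { apply is_RInt_zero_out. intros x Hx. apply Hz. right.
    rewrite Rmin_left in Hx by lra. lra. }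
  replace l with (plus (plus 0 l) 0).
  apply (is_RInt_Chasles (V:=R_NormedModule) phi a d b); auto.
  apply (is_RInt_Chasles (V:=R_NormedModule) phi a c d); auto.
  unfold plus; simpl; ring.
Qed.

Lemma gen_inner (phi : R -> R) c d l : c <= d ->
  (forall x, x < c \/ d < x -> phi x = 0) -> is_RInt phi c d l ->
  is_RInt_gen phi (Rbar_locally m_infty) (Rbar_locally p_infty) l.
Proof.
  intros Hcd Hz Hl P HP.
  apply Filter_prod with (fun a => a < c) (fun b => d < b).
  - exists c. auto.
  - exists d. auto.
  - intros a b Ha Hb. exists l. split.
    + simpl. apply (supp_RInt phi c d); auto; lra.
    + apply locally_singleton; auto.
Qed.

Lemma gen_outer (phi : R -> R) c d l : 0 <= c -> c <= d ->
  (forall x, x < c \/ d < x -> phi x = 0) -> is_RInt phi c d l ->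
  is_RInt_gen phi (at_point 0) (Rbar_locally p_infty) l.
Proof.
  intros H0 Hcd Hz Hl P HP.
  apply Filter_prod with (fun a => a = 0) (fun b => d < b).
  - unfold at_point. auto.
  - exists d. auto.
  - intros a b Ha Hb. exists l. split.
    + simpl. apply (supp_RInt phi c d); auto; lra.
    + apply locally_singleton; auto.
Qed.

Lemma RInt_gen_inner (phi : R -> R) c d l : c <= d ->
  (forall x, x < c \/ d < x -> phi x = 0) -> is_RInt phi c d l ->
  RInt_gen phi (Rbar_locally m_infty) (Rbar_locally p_infty) = l.
Proof.
  intros. apply (is_RInt_gen_unique (V:=R_CompleteNormedModule)). eapply gen_inner; eauto.
Qed.

Lemma RInt_gen_outer (phi : R -> R) c d l : 0 <= c -> c <= d ->
  (forall x, x < c \/ d < x -> phi x = 0) -> is_RInt phi c d l ->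
  RInt_gen phi (at_point 0) (Rbar_locally p_infty) = l.
Proof.
  intros. apply (is_RInt_gen_unique (V:=R_CompleteNormedModule)). eapply gen_outer; eauto.
Qed.

Lemma Rpower_pos' x y : 0 < Rpower x y.
Proof. unfold Rpower. apply exp_pos. Qed.

Lemma rs_large (B Gam kap rl rr ul ur : R) (rstar : R -> R -> R) :
  0 < B -> 1 <= Gam <= 3 -> 0 < kap <= 1 -> 0 < rl ->
  ur <= ul - B / Rpower rl kap ->
  (forall a A, admissible rl rr a A ->
     rl < rstar a A < / a /\
     ur = - pres a A B Gam kap (rstar a A) + ul + pres a A B Gam kap rl) ->
  forall M, rl <= M -> exists delta, 0 < delta /\ forall a A, admissible rl rr a A ->
    a < delta -> A < delta -> M < rstar a A.
Proof.
  intros HB HG Hk Hrl Hu Hrs M HM.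
  set (PM := Rpower M kap). set (R2 := Rpower (2 * M) Gam).
  assert (HPM : 0 < PM) by apply Rpower_pos'.
  assert (HR2 : 0 < R2) by apply Rpower_pos'.
  exists (Rmin (/ (2 * M)) (B / (PM * R2))). split.
  { apply Rmin_pos. apply Rinv_0_lt_compat; lra. apply Rdiv_lt_0_compat; auto. apply Rmult_lt_0_compat; auto. }
  intros a A Had Ha HA.
  pose proof (Rmin_l (/ (2 * M)) (B / (PM * R2))) as Hm1.
  pose proof (Rmin_r (/ (2 * M)) (B / (PM * R2))) as Hm2.
  destruct (Hrs a A Had) as [[H1 H2] Heq].
  destruct Had as [Ha0 [HA0 _]].
  set (rs := rstar a A) in *.
  destruct (Rlt_or_le M rs) as [Hlt | Hle]; auto. exfalso.
  unfold pres in Heq.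
  set (Qs := Rpower (rs / (1 - a * rs)) Gam) in *.
  set (Ql := Rpower (rl / (1 - a * rl)) Gam) in *.
  set (Ps := Rpower rs kap) in *. set (Pl := Rpower rl kap) in *.
  assert (HQl : 0 < Ql) by apply Rpower_pos'.
  assert (HPs : 0 < Ps) by apply Rpower_pos'.
  assert (HPl : 0 < Pl) by apply Rpower_pos'.
  assert (Har : a * rs < 1).
  { apply Rmult_lt_reg_l with (/ a). apply Rinv_0_lt_compat; auto.
    rewrite <- Rmult_assoc, Rinv_l, Rmult_1_l, Rmult_1_r by lra. auto. }
  assert (HaM : a * (2 * M) < 1).
  { assert (a * (2 * M) < / (2 * M) * (2 * M)) by (apply Rmult_lt_compat_r; lra).
    rewrite Rinv_l in H by lra. exact H. }
  assert (Hq : rs / (1 - a * rs) <= 2 * M).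
  { unfold Rdiv. apply Rmult_le_reg_r with (1 - a * rs). lra.
    rewrite Rmult_assoc, Rinv_l, Rmult_1_r by lra.
    assert (a * rs * (2 * M) <= a * (2 * M) * M).
    { replace (a * rs * (2 * M)) with (a * (2 * M) * rs) by ring.
      apply Rmult_le_compat_l; [|lra]. apply Rmult_le_pos; lra. }
    nra. }
  assert (HQs : Qs <= R2).
  { apply Rle_Rpower_l. lra. split; auto. apply Rdiv_lt_0_compat; lra. }
  assert (HPs2 : Ps <= PM).
  { apply Rle_Rpower_l. lra. split; lra. }
  assert (HBP : B / PM <= B / Ps).
  { unfold Rdiv. apply Rmult_le_compat_l. lra. apply Rinv_le_contravar; auto. }
  assert (HAQ : B / Ps < A * Qs).
  { assert (0 < A * Ql) by (apply Rmult_lt_0_compat; auto). lra. }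
  assert (A * Qs <= A * R2) by (apply Rmult_le_compat_l; lra).
  assert (HA2 : B / (PM * R2) < A).
  { unfold Rdiv. rewrite Rinv_mult, <- Rmult_assoc.
    apply Rmult_lt_reg_r with R2; auto. rewrite Rmult_assoc, Rinv_l, Rmult_1_r by lra.
    unfold Rdiv in HBP. lra. }
  lra.
Qed.

Definition supp (psi : R -> R -> R) X T1 T2 :=
  forall x t, (X < Rabs x \/ t < T1 \/ T2 < t) -> psi x t = 0.

Lemma cmul (c : R) (g : R -> R) t : continuous g t -> continuous (fun t => c * g t) t.
Proof. intros H. apply (continuous_mult (K:=R_AbsRing) (fun _ => c) g). apply continuous_const. exact H. Qed.

Lemma outer_cont (h : R -> R) T1 T2 : 0 < T1 <= T2 ->
  (forall t, t < T1 \/ T2 < t -> h t = 0) -> (forall t, continuous h t) ->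
  RInt_gen h (at_point 0) (Rbar_locally p_infty) = RInt h T1 T2.
Proof.
  intros HT Hz Hc. apply (RInt_gen_outer h T1 T2); try lra; auto.
  apply (RInt_correct (V:=R_CompleteNormedModule)).
  apply (ex_RInt_continuous (V:=R_CompleteNormedModule)). intros; auto.
Qed.

Lemma inner_eval (psi : R -> R -> R) K t (phi : R -> R) p q c1 c2 c3 :
  (forall x t, continuity_2d_pt psi x t) ->
  (forall x, K < Rabs x -> psi x t = 0) -> -K <= p -> p <= q -> q <= K ->
  (forall x, x < p -> phi x = c1 * psi x t) ->
  (forall x, p < x < q -> phi x = c2 * psi x t) ->
  (forall x, q < x -> phi x = c3 * psi x t) ->
  RInt_gen phi (Rbar_locally m_infty) (Rbar_locally p_infty) =
  c1 * RInt (fun x => psi x t) (-K) p + c2 * RInt (fun x => psi x t) p q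
  + c3 * RInt (fun x => psi x t) q K.
Proof.
  intros Hc HK Hp Hpq Hq H1 H2 H3.
  assert (piece : forall a b c, a <= b -> (forall x, a < x < b -> phi x = c * psi x t) ->
            is_RInt phi a b (c * RInt (fun x => psi x t) a b)).
  { intros a b c Hab Hab'.
    apply (is_RInt_ext (fun x => scal c (psi x t))).
    { intros x Hx. rewrite Rmin_left, Rmax_right in Hx by lra. rewrite Hab' by lra. reflexivity. }
    apply (is_RInt_scal (V:=R_NormedModule) (fun x => psi x t)).
    apply (RInt_correct (V:=R_CompleteNormedModule)). apply exR; auto. }
  apply (RInt_gen_inner phi (-K) K); try lra.
  - intros x [Hx | Hx].
    + rewrite H1 by lra. rewrite HK. ring. rewrite Rabs_left; lra.
    + rewrite H3 by lra. rewrite HK. ring. rewrite Rabs_right; lra.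
  - apply (is_RInt_Chasles (V:=R_NormedModule) phi (-K) q K).
    apply (is_RInt_Chasles (V:=R_NormedModule) phi (-K) p q).
    + apply piece; auto. intros; apply H1; lra.
    + apply piece; auto.
    + apply piece; auto. intros; apply H3; lra.
Qed.

Lemma dint_eval (psi : R -> R -> R) X T1 T2 K (f : R -> R -> R) c1 c2 c3 al be :
  (forall x t, continuity_2d_pt psi x t) -> 0 < T1 <= T2 -> supp psi X T1 T2 ->
  Rabs X <= K ->
  (forall t, T1 <= t <= T2 -> -K <= al * t /\ al * t <= be * t /\ be * t <= K) ->
  (forall x t, T1 <= t <= T2 -> x < al * t -> f x t = c1 * psi x t) ->
  (forall x t, T1 <= t <= T2 -> al * t < x < be * t -> f x t = c2 * psi x t) ->
  (forall x t, T1 <= t <= T2 -> be * t < x -> f x t = c3 * psi x t) ->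
  (forall x t, psi x t = 0 -> f x t = 0) ->
  dint f = RInt (fun t => c1 * RInt (fun x => psi x t) (-K) (al * t)
                        + c2 * RInt (fun x => psi x t) (al * t) (be * t)
                        + c3 * RInt (fun x => psi x t) (be * t) K) T1 T2.
Proof.
  intros Hc HT Hs HK Hab H1 H2 H3 H0.
  unfold dint.
  set (Ga := fun t => c1 * RInt (fun x => psi x t) (-K) (al * t)
                        + c2 * RInt (fun x => psi x t) (al * t) (be * t)
                        + c3 * RInt (fun x => psi x t) (be * t) K).
  assert (Gz : forall t, t < T1 \/ T2 < t -> Ga t = 0).
  { intros t Ht. unfold Ga. rewrite !(RInt_zero_fn (fun x => psi x t)). ring.
    all: intros; apply Hs; tauto. }
  assert (EG : (fun t => RInt_gen (fun x => f x t) (Rbar_locally m_infty) (Rbar_locally p_infty)) = Ga).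
  { apply functional_extensionality. intro t.
  destruct (Rlt_or_le t T1) as [Ht | Ht1]; [| destruct (Rlt_or_le T2 t) as [Ht | Ht2]].
  + rewrite Gz by tauto. apply (RInt_gen_inner _ 0 0); try lra.
    * intros; apply H0, Hs; tauto.
    * apply (is_RInt_ext (fun _ => 0)). intros; symmetry; apply H0, Hs; tauto.
      apply (is_RInt_point (V:=R_NormedModule)).
  + rewrite Gz by tauto. apply (RInt_gen_inner _ 0 0); try lra.
    * intros; apply H0, Hs; tauto.
    * apply (is_RInt_ext (fun _ => 0)). intros; symmetry; apply H0, Hs; tauto.
      apply (is_RInt_point (V:=R_NormedModule)).
  + destruct (Hab t (conj Ht1 Ht2)) as [Ha [Hb Hc']].
    unfold Ga. apply (inner_eval psi K t); auto.
    all: try (intros x Hx; apply Hs; left; pose proof (Rle_abs X); lra).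
    all: intros; try apply H1; try apply H2; try apply H3; auto.
  }
  rewrite EG.
  apply outer_cont; auto.
  intro t. unfold Ga.
  assert (Hl : forall c, continuous (fun t : R => c * t) t).
  { intro c. apply (continuous_mult (fun _ => c) (fun t => t)). apply continuous_const. apply continuous_id. }
  apply (continuous_plus (fun t => c1 * RInt (fun x => psi x t) (-K) (al * t)
                      + c2 * RInt (fun x => psi x t) (al * t) (be * t))).
  apply (continuous_plus (fun t => c1 * RInt (fun x => psi x t) (-K) (al * t))).
  all: apply cmul.
  + apply (param_cont psi (fun _ => -K) (fun t => al * t)); auto. apply continuous_const.
  + apply (param_cont psi (fun t => al * t) (fun t => be * t)); auto.
  + apply (param_cont psi (fun t => be * t) (fun _ => K)); auto. apply continuous_const.
Qed.

Lemma sig_eq a A B Gam kap rl ul ur rs : rl < rs ->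
  ur = - pres a A B Gam kap rs + ul + pres a A B Gam kap rl ->
  sigma1 a A B Gam kap rl ul rs = ur - rl * (ul - ur) / (rs - rl).
Proof.
  intros H1 H2. unfold sigma1.
  replace (pres a A B Gam kap rs - pres a A B Gam kap rl) with (ul - ur) by lra.
  field. lra.
Qed.

Lemma gap c eta rs rl : 0 < c -> 0 < eta -> rl + c / eta < rs -> c / (rs - rl) < eta.
Proof.
  intros Hc He H.
  assert (c < eta * (rs - rl)).
  { assert (c / eta * eta < (rs - rl) * eta) by (apply Rmult_lt_compat_r; lra).
    unfold Rdiv in H0. rewrite Rmult_assoc, Rinv_l, Rmult_1_r in H0 by lra. lra. }
  assert (0 < rs - rl).
  { assert (0 < c / eta) by (apply Rdiv_lt_0_compat; auto). lra. }
  apply Rmult_lt_reg_r with (rs - rl); auto. unfold Rdiv.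
  rewrite Rmult_assoc, Rinv_l, Rmult_1_r by lra. lra.
Qed.

Lemma divlt x s t : 0 < t -> (x < s * t <-> x / t < s).
Proof.
  intros Ht. split; intros H.
  - apply Rmult_lt_reg_r with t; auto. unfold Rdiv. rewrite Rmult_assoc, Rinv_l, Rmult_1_r by lra. lra.
  - apply Rmult_lt_compat_r with (r := t) in H; auto. unfold Rdiv in H.
    rewrite Rmult_assoc, Rinv_l, Rmult_1_r in H by lra. lra.
Qed.

Lemma divgt x s t : 0 < t -> (s * t < x <-> s < x / t).
Proof.
  intros Ht. split; intros H.
  - apply Rmult_lt_reg_r with t; auto. unfold Rdiv. rewrite Rmult_assoc, Rinv_l, Rmult_1_r by lra. lra.
  - apply Rmult_lt_compat_r with (r := t) in H; auto. unfold Rdiv in H.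
    rewrite Rmult_assoc, Rinv_l, Rmult_1_r in H by lra. lra.
Qed.

Lemma Ga_cont (psi : R -> R -> R) K c1 c2 c3 al be t :
  (forall x t, continuity_2d_pt psi x t) ->
  continuous (fun t => c1 * RInt (fun x => psi x t) (-K) (al * t)
                        + c2 * RInt (fun x => psi x t) (al * t) (be * t)
                        + c3 * RInt (fun x => psi x t) (be * t) K) t.
Proof.
  intros Hc.
  assert (Hl : forall c, continuous (fun t : R => c * t) t).
  { intro c. apply (continuous_mult (fun _ => c) (fun t => t)). apply continuous_const. apply continuous_id. }
  apply (continuous_plus (fun t => c1 * RInt (fun x => psi x t) (-K) (al * t)
                      + c2 * RInt (fun x => psi x t) (al * t) (be * t))).
  apply (continuous_plus (fun t => c1 * RInt (fun x => psi x t) (-K) (al * t))).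
  all: apply cmul.
  + apply (param_cont psi (fun _ => -K) (fun t => al * t)); auto. apply continuous_const.
  + apply (param_cont psi (fun t => al * t) (fun t => be * t)); auto.
  + apply (param_cont psi (fun t => be * t) (fun _ => K)); auto. apply continuous_const.
Qed.

Lemma part1 (B Gam kap rl rr ul ur : R) (rstar : R -> R -> R) :
  0 < B -> 1 <= Gam <= 3 -> 0 < kap <= 1 ->
  0 < rl -> 0 < rr -> 0 <= ul -> 0 <= ur ->
  ur <= ul - B / Rpower rl kap ->
  (forall a A, admissible rl rr a A ->
     rl < rstar a A < / a /\
     ur = - pres a A B Gam kap (rstar a A) + ul + pres a A B Gam kap rl) ->
  (forall x t, 0 < t ->
     (x < ur * t ->
        lim_aA rl rr (fun a A => u_sol a A B Gam kap rl rr ul ur (rstar a A) (x / t)) ul) /\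
     (x = ur * t ->
        lim_aA rl rr (fun a A => u_sol a A B Gam kap rl rr ul ur (rstar a A) (x / t)) ur) /\
     (x > ur * t ->
        lim_aA rl rr (fun a A => u_sol a A B Gam kap rl rr ul ur (rstar a A) (x / t)) ur)).
Proof.
  intros HB HG Hk Hrl Hrr Hul Hur Hu Hrs.
  assert (Hc : 0 < rl * (ul - ur)).
  { assert (0 < B / Rpower rl kap) by (apply Rdiv_lt_0_compat; auto; apply Rpower_pos').
    apply Rmult_lt_0_compat; lra. }
  assert (Hsl : forall a A, admissible rl rr a A ->
     sigma1 a A B Gam kap rl ul (rstar a A) < ur).
  { intros a A Had. destruct (Hrs a A Had) as [[H1 H2] Heq].
    rewrite (sig_eq _ _ _ _ _ _ _ _ _ H1 Heq).
    assert (0 < rl * (ul - ur) / (rstar a A - rl)) by (apply Rdiv_lt_0_compat; lra). lra. }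
  intros x t Ht. split; [|split].
  - intros Hx eps He. apply divlt in Hx; auto.
    set (z := x / t) in *.
    destruct (rs_large B Gam kap rl rr ul ur rstar HB HG Hk Hrl Hu Hrs
                (rl + rl * (ul - ur) / (ur - z) + 1)) as [d [Hd Hd']].
    { assert (0 < rl * (ul - ur) / (ur - z)) by (apply Rdiv_lt_0_compat; lra). lra. }
    exists d. split; auto. intros a A Had Ha HA.
    specialize (Hd' a A Had Ha HA).
    destruct (Hrs a A Had) as [[H1 H2] Heq].
    unfold u_sol. rewrite (sig_eq _ _ _ _ _ _ _ _ _ H1 Heq).
    assert (rl * (ul - ur) / (rstar a A - rl) < ur - z) by (apply gap; lra).
    destruct (Rlt_dec z _) as [_|Hn]; [|exfalso; lra].
    rewrite Rminus_diag, Rabs_R0; auto.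
  - intros Hx eps He. exists 1. split; [lra|]. intros a A Had Ha HA.
    assert (Hz : x / t = ur) by (subst x; field; lra). rewrite Hz.
    specialize (Hsl a A Had).
    unfold u_sol. destruct (Rlt_dec ur _) as [Hn|_]; [exfalso; lra|].
    destruct (Rle_dec ur ur); rewrite Rminus_diag, Rabs_R0; auto.
  - intros Hx eps He. exists 1. split; [lra|]. intros a A Had Ha HA.
    apply divgt in Hx; auto.
    specialize (Hsl a A Had).
    unfold u_sol. destruct (Rlt_dec (x / t) _) as [Hn|_]; [exfalso; lra|].
    destruct (Rle_dec (x / t) ur); rewrite Rminus_diag, Rabs_R0; auto.
Qed.

Lemma part2 (B Gam kap rl rr ul ur : R) (rstar : R -> R -> R) :
  0 < B -> 1 <= Gam <= 3 -> 0 < kap <= 1 ->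
  0 < rl -> 0 < rr -> 0 <= ul -> 0 <= ur ->
  ur <= ul - B / Rpower rl kap ->
  (forall a A, admissible rl rr a A ->
     rl < rstar a A < / a /\
     ur = - pres a A B Gam kap (rstar a A) + ul + pres a A B Gam kap rl) ->
  (forall psi, test_fun psi ->
     lim_aA rl rr
       (fun a A => dint (fun x t =>
           rho_sol a A B Gam kap rl rr ul ur (rstar a A) (x / t) * psi x t))
       (RInt_gen (fun t => rl * (ul - ur) * t * psi (ur * t) t)
                 (at_point 0) (Rbar_locally p_infty)
        + dint (fun x t => Hstep rl rr (x - ur * t) * psi x t))).
Proof.
  intros HB HG Hk Hrl Hrr Hul Hur Hu Hrs.
  assert (Hc : 0 < rl * (ul - ur)).
  { assert (0 < B / Rpower rl kap) by (apply Rdiv_lt_0_compat; auto; apply Rpower_pos').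
    apply Rmult_lt_0_compat; lra. }
  intros psi [Hk' [X [T1 [T2 [HT1 [HT12 Hs]]]]]].
  assert (Hcp : forall x t, continuity_2d_pt psi x t) by exact (Hk' 0%nat).
  fold (supp psi X T1 T2) in Hs.
  set (K := Rabs X + (Rabs ur + 1) * T2).
  assert (HXK : Rabs X <= K).
  { unfold K. assert (0 <= (Rabs ur + 1) * T2) by (apply Rmult_le_pos; [pose proof (Rabs_pos ur)|]; lra). lra. }
  assert (HurK : forall t, T1 <= t <= T2 -> - K <= ur * t /\ ur * t <= K).
  { intros t Ht. unfold K. pose proof (Rabs_pos X). pose proof (Rle_abs ur).
    pose proof (Rabs_pos ur). split; nra. }
  set (hL := fun t => rl * (ul - ur) * t * psi (ur * t) t).
  assert (HhLc : forall t, continuous hL t).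
  { intro t. unfold hL. apply (continuous_mult (K:=R_AbsRing) (fun t => rl * (ul - ur) * t) (fun t => psi (ur * t) t)).
    - apply (continuous_mult (K:=R_AbsRing) (fun _ => rl * (ul - ur)) (fun t => t)).
      apply continuous_const. apply continuous_id.
    - apply comp_cont; auto. }
  assert (EL1 : RInt_gen hL (at_point 0) (Rbar_locally p_infty)
                = RInt hL T1 T2).
  { apply outer_cont; auto. intros t Ht. unfold hL. rewrite Hs by tauto. ring. }
  set (HH := fun t => rl * RInt (fun x => psi x t) (-K) (ur * t)
                        + rl * RInt (fun x => psi x t) (ur * t) (ur * t)
                        + rr * RInt (fun x => psi x t) (ur * t) K).
  assert (EL2 : dint (fun x t => Hstep rl rr (x - ur * t) * psi x t) = RInt HH T1 T2).
  { apply (dint_eval psi X T1 T2 K); auto.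
    - intros t Ht. destruct (HurK t Ht). lra.
    - intros x t _ Hx. unfold Hstep. destruct (Rlt_dec _ 0); [ring | lra].
    - intros x t _ Hx. lra.
    - intros x t _ Hx. unfold Hstep. destruct (Rlt_dec _ 0); [lra | ring].
    - intros x t H0. rewrite H0. ring. }
  rewrite EL1, EL2.
  intros eps He.
  set (c := rl * (ul - ur)) in *.
  set (P := (T2 - T1) * c * T2).
  assert (HP : 0 <= P) by (unfold P; apply Rmult_le_pos; [apply Rmult_le_pos|]; lra).
  set (ep := eps / (2 * (P + 1))).
  assert (Hep : 0 < ep) by (apply Rdiv_lt_0_compat; lra).
  destruct (uniform_continuity_2d psi (-K) K T1 T2 (fun x t _ _ => Hcp x t) (mkposreal ep Hep)) as [dl Hdl].
  simpl in Hdl.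
  assert (Hdl0 := cond_pos dl).
  set (eta := Rmin 1 (dl / (2 * T2))).
  assert (Heta : 0 < eta) by (apply Rmin_pos; [lra | apply Rdiv_lt_0_compat; lra]).
  destruct (rs_large B Gam kap rl rr ul ur rstar HB HG Hk Hrl Hu Hrs (rl + c / eta + 1)) as [d [Hd Hd']].
  { assert (0 < c / eta) by (apply Rdiv_lt_0_compat; auto). lra. }
  exists d. split; auto. intros a A Had Ha HA.
  specialize (Hd' a A Had Ha HA).
  destruct (Hrs a A Had) as [[H1 H2] Heq].
  set (rs := rstar a A) in *.
  set (g := c / (rs - rl)).
  assert (Hg : g < eta) by (unfold g; apply gap; lra).
  assert (Hg0 : 0 < g) by (apply Rdiv_lt_0_compat; lra).
  assert (Hgc : g * (rs - rl) = c) by (unfold g; field; lra).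
  assert (Hg1 : g <= 1) by (pose proof (Rmin_l 1 (dl / (2 * T2))); unfold eta in Hg; lra).
  assert (Hg2 : g * T2 <= dl / 2).
  { pose proof (Rmin_r 1 (dl / (2 * T2))). unfold eta in Hg.
    apply Rle_trans with (dl / (2 * T2) * T2). apply Rmult_le_compat_r; lra.
    right. field. lra. }
  set (s1 := ur - g).
  assert (Hs1 : s1 < ur) by (unfold s1; lra).
  assert (Hsig : sigma1 a A B Gam kap rl ul rs = s1) by (unfold s1, g, c; apply sig_eq; auto).
  rewrite (dint_eval psi X T1 T2 K _ rl rs rr s1 ur); auto.
  2:{ intros t Ht. destruct (HurK t Ht). unfold s1.
      assert (g * t <= t) by nra. assert (0 <= g * t) by nra.
      split; [|split]; try nra.
      pose proof (Rabs_pos X). pose proof (Rle_abs (- ur)) as Hab. rewrite Rabs_Ropp in Hab. pose proof (Rabs_pos ur).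
      assert (ur * t >= - Rabs ur * T2) by nra.
      unfold K. nra. }
  2:{ intros x t Ht Hx. unfold rho_sol. rewrite Hsig. apply divlt in Hx; [|lra].
      destruct (Rlt_dec _ _); [ring | lra]. }
  2:{ intros x t Ht [Hx1 Hx2]. unfold rho_sol. rewrite Hsig. apply divgt in Hx1; [|lra].
      apply divlt in Hx2; [|lra].
      destruct (Rlt_dec _ _); [lra|]. destruct (Rle_dec _ _); [ring | lra]. }
  2:{ intros x t Ht Hx. unfold rho_sol. rewrite Hsig. apply divgt in Hx; [|lra].
      destruct (Rlt_dec _ _); [lra|]. destruct (Rle_dec _ _); [lra | ring]. }
  2:{ intros x t H0. rewrite H0. ring. }
  match goal with |- context [RInt ?G T1 T2 - _] => set (Ga := G) end.
  assert (exG : ex_RInt Ga T1 T2).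
  { apply (ex_RInt_continuous (V:=R_CompleteNormedModule)). intros; apply Ga_cont; auto. }
  assert (exL : ex_RInt hL T1 T2).
  { apply (ex_RInt_continuous (V:=R_CompleteNormedModule)). intros; apply HhLc. }
  assert (exH : ex_RInt HH T1 T2).
  { apply (ex_RInt_continuous (V:=R_CompleteNormedModule)). intros; apply (Ga_cont psi K rl rl rr ur ur); auto. }
  assert (IS := is_RInt_minus _ _ _ _ _ _ (is_RInt_minus _ _ _ _ _ _ (RInt_correct _ _ _ exG) (RInt_correct _ _ _ exL)) (RInt_correct _ _ _ exH)).
  assert (Hs1K : forall t, T1 <= t <= T2 -> - K <= s1 * t).
  { intros t Ht. unfold s1.
    assert (g * t <= t) by nra.
    pose proof (Rabs_pos X). pose proof (Rle_abs (- ur)) as Hab. rewrite Rabs_Ropp in Hab. pose proof (Rabs_pos ur).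
    assert (ur * t >= - Rabs ur * T2) by nra.
    unfold K. nra. }
  assert (PW : forall t, T1 <= t <= T2 ->
     norm (minus ((fun y0 => minus (Ga y0) (hL y0)) t) (HH t)) <= c * T2 * ep).
  { intros t Ht.
    replace (norm (minus ((fun y0 => minus (Ga y0) (hL y0)) t) (HH t))) with (Rabs (Ga t - hL t - HH t)) by reflexivity.
    unfold Ga, hL, HH.
    assert (exI : forall u v, ex_RInt (fun x => psi x t) u v) by (intros; apply exR; auto).
    rewrite <- (RInt_Chasles (fun x => psi x t) (-K) (s1*t) (ur*t)) by auto.
    rewrite RInt_point.
    set (I1 := RInt (fun x => psi x t) (-K) (s1*t)).
    set (I2 := RInt (fun x => psi x t) (s1*t) (ur*t)).
    set (I3 := RInt (fun x => psi x t) (ur*t) K).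
    set (p0 := psi (ur*t) t).
    assert (EJ : RInt (fun x => psi x t - p0) (s1*t) (ur*t) = I2 - (ur*t - s1*t)*p0).
    { transitivity (minus (RInt (fun x => psi x t) (s1*t) (ur*t)) (RInt (fun _ => p0) (s1*t) (ur*t))).
      - apply (RInt_minus (V:=R_CompleteNormedModule) (fun x => psi x t) (fun _ => p0)).
        apply exI. apply ex_RInt_const.
      - rewrite RInt_const. unfold minus, plus, opp, scal; simpl; unfold mult; simpl. unfold I2. ring. }
    assert (Hb : Rabs (RInt (fun x => psi x t - p0) (s1*t) (ur*t)) <= (ur*t - s1*t) * ep).
    { apply (norm_RInt_le_const (V:=R_NormedModule) (fun x => psi x t - p0)).
      - unfold s1. nra.
      - intros x Hx. change (norm ?z) with (Rabs z). left. unfold p0.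
        destruct (HurK t Ht). pose proof (Hs1K t Ht).
        apply (Hdl (ur*t) t x t); try lra.
        + rewrite Rabs_left1 by lra. unfold s1 in Hx. nra.
        + rewrite Rminus_diag, Rabs_R0. lra.
      - apply (RInt_correct (V:=R_CompleteNormedModule)).
        apply (ex_RInt_minus (V:=R_NormedModule) (fun x => psi x t) (fun _ => p0)).
        apply exI. apply ex_RInt_const. }
    change (plus I1 I2) with (I1 + I2).
    change (@zero R_CompleteNormedModule) with 0.
    replace (rl * I1 + rs * I2 + rr * I3 - c * t * p0 - (rl * (I1 + I2) + rl * 0 + rr * I3))
      with ((rs - rl) * (I2 - (ur*t - s1*t)*p0)) by (unfold s1; rewrite <- Hgc; ring).
    rewrite <- EJ, Rabs_mult, (Rabs_pos_eq (rs - rl)) by lra.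
    apply Rle_trans with ((rs-rl)*((ur*t-s1*t)*ep)); [apply Rmult_le_compat_l; lra|].
    replace ((rs-rl)*((ur*t-s1*t)*ep)) with (c*t*ep) by (unfold s1; rewrite <- Hgc; ring).
    apply Rmult_le_compat_r; [lra|]. apply Rmult_le_compat_l; lra. }
  assert (Hn := norm_RInt_le_const _ T1 T2 _ (c*T2*ep) HT12 PW IS).
  change (norm ?z) with (Rabs z) in Hn.
  replace (Rabs (RInt Ga T1 T2 - (RInt hL T1 T2 + RInt HH T1 T2)))
    with (Rabs (minus (minus (RInt Ga T1 T2) (RInt hL T1 T2)) (RInt HH T1 T2))).
  2:{ f_equal. unfold minus, plus, opp; simpl. ring. }
  eapply Rle_lt_trans; [apply Hn|].
  assert (E2 : ep * (2 * (P + 1)) = eps) by (unfold ep; field; lra).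
  replace ((T2 - T1) * (c * T2 * ep)) with (P * ep) by (unfold P; ring).
  rewrite <- E2. nra.
Qed.

Theorem theorem3p1 (B Gam kap rl rr ul ur : R) (rstar : R -> R -> R) :
  0 < B -> 1 <= Gam <= 3 -> 0 < kap <= 1 ->
  0 < rl -> 0 < rr -> 0 <= ul -> 0 <= ur ->
  ur <= ul - B / Rpower rl kap ->
  (* rstar a A is rho_star: in (rho_l, 1/a), solving ur = -p(rho_star) + ul + p(rho_l) *)
  (forall a A, admissible rl rr a A ->
     rl < rstar a A < / a /\
     ur = - pres a A B Gam kap (rstar a A) + ul + pres a A B Gam kap rl) ->
  (forall x t, 0 < t ->
     (x < ur * t ->
        lim_aA rl rr (fun a A => u_sol a A B Gam kap rl rr ul ur (rstar a A) (x / t)) ul) /\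
     (x = ur * t ->
        lim_aA rl rr (fun a A => u_sol a A B Gam kap rl rr ul ur (rstar a A) (x / t)) ur) /\
     (x > ur * t ->
        lim_aA rl rr (fun a A => u_sol a A B Gam kap rl rr ul ur (rstar a A) (x / t)) ur)) /\
  (forall psi, test_fun psi ->
     lim_aA rl rr
       (fun a A => dint (fun x t =>
           rho_sol a A B Gam kap rl rr ul ur (rstar a A) (x / t) * psi x t))
       (RInt_gen (fun t => rl * (ul - ur) * t * psi (ur * t) t)
                 (at_point 0) (Rbar_locally p_infty)
        + dint (fun x t => Hstep rl rr (x - ur * t) * psi x t))).
Proof.
  intros. split.
  - apply (part1 B Gam kap rl rr ul ur rstar); auto.
  - apply (part2 B Gam kap rl rr ul ur rstar); auto.
Qed.
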